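(* Let $A$ be an arrangement of hyperplanes in general position in $\mathbb{R}^d$ and let $q\in\mathbb{R}^d$. Then (1) $\mathrm{RD}(A,q)=\mathrm{TD}(A^*_q,q)$; (2) $\mathrm{HTvD}(A,q)=\mathrm{TvD}(A^*_q,q)$; (3) $\mathrm{HED}(A,q)=\mathrm{ED}(A^*_q,q)$.
   Context: A hyperplane arrangement is a finite set of affine hyperplanes in $\mathbb{R}^d$. Regression depth $\mathrm{RD}(A,q)$: the minimum, over all closed rays emanating from $q$, of the number of hyperplanes of $A$ intersected by or parallel to the ray (a hyperplane containing $q$ is intersected by every ray from $q$). Hyperplane Tverberg depth $\mathrm{HTvD}(A,q)$: the maximum $r$ such that $A$ can be partitioned into $r$ parts with $q$ having regression depth $\ge 1$ with respect to each part. An arrangement $A$ $k$-encloses $q$ if $A$ can be partitioned into $d+1$ pairwise disjoint subsets $A_1,\dots,A_{d+1}$, each of size $k$, such that for every choice $h_1\in A_1,\dots,h_{d+1}\in A_{d+1}$ we have $\mathrm{RD}(\{h_1,\dots,h_{d+1}\},q)\ge 1$; the hyperplane enclosing depth $\mathrm{HED}(A,q)$ is the maximum $k$ such that some sub-arrangement of $A$ $k$-encloses $q$. Duality: for $h\in A$, let $p(h)$ be the point of $h$ closest to $q$; $A^*_q$ is the multiset $\{p(h): h\in A\}$ (hyperplanes through $q$ give copies of $q$). For a finite (multi)set $S$ of points and a point $q$: the Tukey depth $\mathrm{TD}(S,q)$ is the minimum number of points of $S$ in a closed half-space containing $q$; the Tverberg depth $\mathrm{TvD}(S,q)$ is the maximum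 $r$ such that $S$ can be partitioned into $r$ parts whose convex hulls all contain $q$; a point set $S'$ $k$-encloses $q$ if it can be partitioned into $d+1$ disjoint parts of size $k$ such that $q$ lies in the convex hull of every choice of one point from each part, and the enclosing depth $\mathrm{ED}(S,q)$ is the maximum $k$ such that some subset of $S$ $k$-encloses $q$. *)

(* Defs.v *)
From HB Require Import structures.
From mathcomp Require Import all_boot all_order all_algebra.
From mathcomp Require Import boolp classical_sets reals.
Set Implicit Arguments. Unset Strict Implicit. Unset Printing Implicit Defensive.
Import Order.TTheory GRing.Theory Num.Theory.
Local Open Scope ring_scope.

Section Defs.
Variables (R : realType) (d : nat).

Definition dot (u v : 'rV[R]_d) : R := \sum_(k < d) u 0 k * v 0 k.
Definition sqdist (u v : 'rV[R]_d) : R := \sum_(k < d) (u 0 k - v 0 k) ^+ 2.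

(* minimum / maximum of a set of naturals (0 if it does not exist) *)
Definition natmin (P : set nat) : nat :=
  xget 0%N [set k | P k /\ forall j, P j -> (k <= j)%N].
Definition natmax (P : set nat) : nat :=
  xget 0%N [set k | P k /\ forall j, P j -> (j <= k)%N].

(* an affine hyperplane {x | hn . x = hb}, with hn <> 0 (required separately) *)
Record hyp := Hyp { hn : 'rV[R]_d ; hb : R }.
Definition on_hyp (h : hyp) (x : 'rV[R]_d) : Prop := dot (hn h) x = hb h.

Definition general_position (I : finType) (A : I -> hyp) : Prop :=
  (forall i, hn (A i) != 0) /\
  (forall (S : {set I}) (c : I -> R), (#|S| <= d)%N ->
     \sum_(i in S) c i *: hn (A i) = 0 -> forall i, i \in S -> c i = 0) /\
  (forall (S : {set I}), #|S| = d.+1 ->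
     ~ exists x, forall i, i \in S -> on_hyp (A i) x).

Definition ray_hits (h : hyp) (q v : 'rV[R]_d) : Prop :=
  (exists t : R, 0 <= t /\ on_hyp h (q + t *: v)) \/ dot (hn h) v = 0.

Definition RD (J : finType) (A : J -> hyp) (S : {set J}) (q : 'rV[R]_d) : nat :=
  natmin [set k | exists v : 'rV[R]_d, v != 0 /\
            k = #|[set i in S | `[< ray_hits (A i) q v >] ]| ].

Definition HTvD (I : finType) (A : I -> hyp) (q : 'rV[R]_d) : nat :=
  natmax [set r | exists f : I -> 'I_r,
            forall j : 'I_r, (1 <= RD A [set i | f i == j] q)%N ].

Definition parts_ok (I : finType) (P : 'I_d.+1 -> {set I}) (k : nat) : Prop :=
  (forall j, #|P j| = k) /\
  (forall j1 j2, j1 != j2 -> [disjoint P j1 & P j2]).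

Definition HED (I : finType) (A : I -> hyp) (q : 'rV[R]_d) : nat :=
  natmax [set k | exists P : 'I_d.+1 -> {set I}, parts_ok P k /\
            forall s : 'I_d.+1 -> I, (forall j, s j \in P j) ->
              (1 <= RD (fun j => A (s j)) [set: 'I_d.+1] q)%N ].

Definition closest (h : hyp) (q : 'rV[R]_d) : 'rV[R]_d :=
  xget 0 [set x | on_hyp h x /\ forall y, on_hyp h y -> sqdist q x <= sqdist q y].

Definition dual (I : finType) (A : I -> hyp) (q : 'rV[R]_d) : I -> 'rV[R]_d :=
  fun i => closest (A i) q.

Definition in_conv (J : finType) (p : J -> 'rV[R]_d) (S : {set J}) (q : 'rV[R]_d)
  : Prop :=
  exists w : J -> R, (forall j, 0 <= w j) /\ \sum_(j in S) w j = 1 /\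
    \sum_(j in S) w j *: p j = q.

Definition TD (I : finType) (p : I -> 'rV[R]_d) (q : 'rV[R]_d) : nat :=
  natmin [set k | exists (c : 'rV[R]_d) (e : R), c != 0 /\ dot c q <= e /\
            k = #|[set i | dot c (p i) <= e]| ].

Definition TvD (I : finType) (p : I -> 'rV[R]_d) (q : 'rV[R]_d) : nat :=
  natmax [set r | exists f : I -> 'I_r,
            forall j : 'I_r, in_conv p [set i | f i == j] q ].

Definition ED (I : finType) (p : I -> 'rV[R]_d) (q : 'rV[R]_d) : nat :=
  natmax [set k | exists P : 'I_d.+1 -> {set I}, parts_ok P k /\
            forall s : 'I_d.+1 -> I, (forall j, s j \in P j) ->
              in_conv (fun j => p (s j)) [set: 'I_d.+1] q ].

End Defs.

(* Main.v *)
Require Import Defs.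
From HB Require Import structures.
From mathcomp Require Import all_boot all_order all_algebra.
From mathcomp Require Import boolp classical_sets reals.
From mathcomp Require Import ring lra.
Set Implicit Arguments. Unset Strict Implicit. Unset Printing Implicit Defensive.
Import Order.TTheory GRing.Theory Num.Theory.
Local Open Scope ring_scope.

Section Dot.
Variables (R : realType) (d : nat).
Implicit Types u v x y : 'rV[R]_d.

Lemma dotC u v : dot u v = dot v u.
Proof. by apply: eq_bigr => k _; rewrite mulrC. Qed.
Lemma dotDl u v x : dot (u + v) x = dot u x + dot v x.
Proof. by rewrite /dot -big_split; apply: eq_bigr => k _; rewrite mxE mulrDl. Qed.
Lemma dotZl a u x : dot (a *: u) x = a * dot u x.
Proof. by rewrite /dot mulr_sumr; apply: eq_bigr => k _; rewrite mxE mulrA. Qed.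
Lemma dotNl u x : dot (- u) x = - dot u x.
Proof. by rewrite /dot -sumrN; apply: eq_bigr => k _; rewrite mxE mulNr. Qed.
Lemma dotBl u v x : dot (u - v) x = dot u x - dot v x.
Proof. by rewrite dotDl dotNl. Qed.
Lemma dot0l x : dot 0 x = 0.
Proof. by rewrite /dot big1 // => k _; rewrite mxE mul0r. Qed.
Lemma dotDr u v x : dot x (u + v) = dot x u + dot x v.
Proof. by rewrite !(dotC x) dotDl. Qed.
Lemma dotZr a u x : dot x (a *: u) = a * dot x u.
Proof. by rewrite !(dotC x) dotZl. Qed.
Lemma dotNr u x : dot x (- u) = - dot x u.
Proof. by rewrite !(dotC x) dotNl. Qed.
Lemma dotBr u v x : dot x (u - v) = dot x u - dot x v.
Proof. by rewrite !(dotC x) dotBl. Qed.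
Lemma dot0r x : dot x 0 = 0.
Proof. by rewrite dotC dot0l. Qed.
Lemma dot_sumr (J : finType) (P : pred J) (F : J -> 'rV[R]_d) x :
  dot x (\sum_(i | P i) F i) = \sum_(i | P i) dot x (F i).
Proof.
rewrite /dot; under eq_bigr do rewrite summxE mulr_sumr.
by rewrite exchange_big.
Qed.
Lemma dot_self_ge0 x : 0 <= dot x x.
Proof. by apply: sumr_ge0 => k _; rewrite -expr2 sqr_ge0. Qed.
Lemma dot_self_eq0 x : dot x x = 0 -> x = 0.
Proof.
move=> H; apply/rowP => k; rewrite mxE.
have H' : \sum_(k : 'I_d) (x 0 k) ^+ 2 = 0.
  by rewrite -[RHS]H; apply: eq_bigr => i _; rewrite expr2.
have := @psumr_eq0P _ _ xpredT _ (fun k _ => sqr_ge0 (x 0 k)) H' k isT.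
by move/eqP; rewrite sqrf_eq0 => /eqP.
Qed.

Lemma bigK (J : finType) (S : {set J}) (x y : J -> R) :
  (forall i, i \in S -> 0 < x i) ->
  exists K, 0 <= K /\ forall i, i \in S -> y i < K * x i.
Proof.
move=> Hx; exists (\sum_(j in S) (`|y j| + 1) / x j); split.
  by apply: sumr_ge0 => j Hj; apply: divr_ge0; [by rewrite addr_ge0 | exact: (ltW (Hx j Hj))].
move=> i Hi; have xi := Hx i Hi.
have H1 : (`|y i| + 1) / x i <= \sum_(j in S) (`|y j| + 1) / x j.
  rewrite (big_setD1 i Hi) /= lerDl; apply: sumr_ge0 => j.
  rewrite in_setD1 => /andP [_ Hj]; apply: divr_ge0; [by rewrite addr_ge0 | exact: (ltW (Hx j Hj))].
have H2 : (`|y i| + 1) / x i * x i <= (\sum_(j in S) (`|y j| + 1) / x j) * x i.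
  by apply: ler_wpM2r H1; apply: ltW.
rewrite divfK ?gt_eqF // in H2.
have := ler_norm (y i); lra.
Qed.

Lemma neg_comb (J : finType) (S : {set J}) (l x : J -> R) :
  (forall j, 0 <= l j) -> \sum_(j in S) l j = 1 ->
  (forall j, j \in S -> x j < 0) -> \sum_(j in S) l j * x j < 0.
Proof.
move=> Hl Hs Hx; rewrite lt_neqAle; apply/andP; split; last first.
  by apply: sumr_le0 => j Hj; apply: mulr_ge0_le0 => //; exact: (ltW (Hx j Hj)).
apply/eqP => H0.
have H1 : \sum_(j in S) - (l j * x j) = 0 by rewrite sumrN H0 oppr0.
have H2 : forall j, j \in S -> 0 <= - (l j * x j).
  by move=> j Hj; rewrite oppr_ge0; apply: mulr_ge0_le0 => //; exact: (ltW (Hx j Hj)).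
have H3 : forall j, j \in S -> l j = 0.
  move=> j Hj; have := @psumr_eq0P _ _ (fun j => j \in S) _ H2 H1 j Hj.
  move/eqP; rewrite oppr_eq0 mulf_eq0 => /orP [/eqP //|/eqP xj].
  by have := Hx j Hj; rewrite xj ltxx.
have H4 : \sum_(j in S) l j = 0 by apply: big1.
by move: Hs; rewrite H4 => /eqP; rewrite eq_sym oner_eq0.
Qed.

Lemma gordan (J : finType) n : forall (a : J -> 'rV[R]_d) (S : {set J}),
  #|S| = n -> in_conv a S 0 \/ exists v, forall i, i \in S -> dot v (a i) < 0.
Proof.
elim: n => [|n IH] a S HS.
  right; exists 0 => i; move: HS => /eqP; rewrite cards_eq0 => /eqP ->.
  by rewrite inE.
have [b Hb] : exists b, b \in S by apply/set0Pn; rewrite -cards_eq0 HS.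
have HS' : #|S :\ b| = n by move: HS; rewrite (cardsD1 b S) Hb add1n => -[].
have memS : forall i, i \in S -> i = b \/ i \in S :\ b.
  move=> i Hi; case: (eqVneq i b) => [->|ne]; [by left | by right; rewrite in_setD1 ne Hi].
case: (eqVneq (S :\ b) finset.set0) => [S'0|S'n].
  case: (eqVneq (a b) 0) => [ab0|abn].
    left; exists (fun j => (j == b)%:R); split; first by move=> j; rewrite ler0n.
    split; first by rewrite (big_setD1 b Hb) S'0 big_set0 eqxx /= addr0.
    by rewrite (big_setD1 b Hb) S'0 big_set0 eqxx /= addr0 scale1r ab0.
  right; exists (- a b) => i /memS [->|]; last by rewrite S'0 inE.
  rewrite dotNl oppr_lt0 lt_neqAle dot_self_ge0 andbT; apply/eqP => H.
  by apply: (negP abn); apply/eqP; apply: dot_self_eq0; rewrite H.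
have [i0 Hi0] : exists i0, i0 \in S :\ b by apply/set0Pn.
case: (IH a (S :\ b) HS') => [[w [w0 [w1 w2]]]|[v Hv]].
  left; exists (fun j => if j == b then 0 else w j); split.
    by move=> j; case: ifP.
  split.
    rewrite (big_setD1 b Hb) /= eqxx add0r -[RHS]w1; apply: eq_bigr => j.
    by rewrite in_setD1 => /andP [/negbTE -> _].
  rewrite (big_setD1 b Hb) /= eqxx scale0r add0r -[RHS]w2; apply: eq_bigr => j.
  by rewrite in_setD1 => /andP [/negbTE -> _].
case: (ltP (dot v (a b)) 0) => [vbn|vb0].
  by right; exists v => i /memS [->//|]; exact: Hv.
pose c := fun j => dot v (a b) *: a j - dot v (a j) *: a b.
case: (IH c (S :\ b) HS') => [[l [l0 [l1 l2]]]|[u Hu]].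
  pose al := - \sum_(j in S :\ b) l j * dot v (a j).
  have Hal : 0 < al by rewrite oppr_gt0; apply: neg_comb.
  have Hc : dot v (a b) *: (\sum_(j in S :\ b) l j *: a j) + al *: a b = 0.
    rewrite -[RHS]l2 /c /al scaleNr (scaler_suml (a b)) (scaler_sumr (dot v (a b))).
    rewrite -sumrN -big_split /=.
    apply: eq_bigr => j _; rewrite scalerBr !scalerA.
    by rewrite [dot v (a b) * l j]mulrC.
  have Hne : dot v (a b) + al != 0 by rewrite gt_eqF //; lra.
  left; exists (fun j => if j == b then al / (dot v (a b) + al)
                          else l j * dot v (a b) / (dot v (a b) + al)); split.
    move=> j; case: ifP => _; apply: divr_ge0; try apply: mulr_ge0; try lra.
    exact: l0.
  split.
    rewrite (big_setD1 b Hb) /= eqxx.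
    rewrite (eq_bigr (fun j => l j * dot v (a b) / (dot v (a b) + al))); last first.
      by move=> j; rewrite in_setD1 => /andP [/negbTE -> _].
    rewrite -mulr_suml -mulr_suml l1; field; exact: Hne.
  rewrite (big_setD1 b Hb) /= eqxx.
  rewrite (eq_bigr (fun j => (dot v (a b) + al)^-1 *: (dot v (a b) *: (l j *: a j))));
    last first.
    move=> j; rewrite in_setD1 => /andP [/negbTE -> _]; rewrite !scalerA; congr (_ *: _); ring.
  rewrite -scaler_sumr -scaler_sumr.
  have -> : al / (dot v (a b) + al) *: a b = (dot v (a b) + al)^-1 *: (al *: a b).
    by rewrite scalerA mulrC.
  by rewrite -scalerDr (addrC (al *: a b)) Hc scaler0.
have Huc : forall j, j \in S :\ b ->
    dot v (a b) * dot u (a j) - dot v (a j) * dot u (a b) < 0.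
  by move=> j Hj; have := Hu j Hj; rewrite /c dotBr !dotZr.
case: (eqVneq (dot v (a b)) 0) => [vb_0|vb_n].
  have uab : dot u (a b) < 0.
    have := Huc i0 Hi0; have := Hv i0 Hi0; rewrite vb_0; nra.
  have [K [K0 HK]] := @bigK J (S :\ b) (fun j => - dot v (a j))
                           (fun j => dot u (a j))
                           (fun j Hj => (ltac:(rewrite oppr_gt0; exact: Hv j Hj))).
  right; exists (u + K *: v) => i /memS [->|Hi].
    by rewrite dotDl dotZl vb_0 mulr0 addr0.
  have := HK i Hi; rewrite dotDl dotZl /=; lra.
have vbp : 0 < dot v (a b) by rewrite lt_neqAle eq_sym vb_n vb0.
have [K [K0 HK]] := @bigK J (S :\ b)
    (fun j => - (dot v (a b) * dot u (a j) - dot v (a j) * dot u (a b)))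
    (fun j => - dot v (a j))
    (fun j Hj => (ltac:(rewrite oppr_gt0; exact: Huc j Hj))).
right; exists (K *: (dot v (a b) *: u - dot u (a b) *: v) - v) => i /memS [->|Hi].
  rewrite dotBl dotZl dotBl !dotZl.
  have -> : dot v (a b) * dot u (a b) - dot u (a b) * dot v (a b) = 0 by ring.
  by rewrite mulr0 sub0r oppr_lt0.
have := HK i Hi; rewrite dotBl dotZl dotBl !dotZl /=.
have -> : dot u (a b) * dot v (a i) = dot v (a i) * dot u (a b) by ring.
lra.
Qed.

Lemma sqdist_dot u v : sqdist u v = dot (u - v) (u - v).
Proof. by apply: eq_bigr => k _; rewrite !mxE expr2. Qed.

Definition proj (h : hyp R d) (q : 'rV[R]_d) :=
  q + ((hb h - dot (hn h) q) / dot (hn h) (hn h)) *: hn h.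

Lemma dot_pos x : x != 0 -> 0 < dot x x.
Proof.
move=> xn; rewrite lt_neqAle dot_self_ge0 andbT; apply/eqP => H.
by apply: (negP xn); apply/eqP; apply: dot_self_eq0; rewrite H.
Qed.

Lemma proj_on h q : hn h != 0 -> on_hyp h (proj h q).
Proof.
move=> hn0; have N0 := dot_pos hn0.
rewrite /on_hyp /proj dotDr dotZr; by field; rewrite gt_eqF.
Qed.

Lemma proj_pyth h q x : hn h != 0 -> on_hyp h x ->
  sqdist q x = sqdist q (proj h q) + dot (x - proj h q) (x - proj h q).
Proof.
move=> hn0 Hx; have Hp := proj_on q hn0.
have Hfe : dot (q - proj h q) (x - proj h q) = 0.
  have -> : q - proj h q = - ((hb h - dot (hn h) q) / dot (hn h) (hn h)) *: hn h.
    by rewrite /proj scaleNr opprD addrA subrr add0r.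
  by rewrite dotZl dotBr Hx Hp subrr mulr0.
rewrite !sqdist_dot.
have -> : q - x = (q - proj h q) - (x - proj h q) by rewrite opprB addrA subrK.
move: (q - proj h q) (x - proj h q) Hfe => f e Hfe.
rewrite !dotBl !dotBr (dotC e f) Hfe; lra.
Qed.

Lemma closest_proj h q : hn h != 0 -> closest h q = proj h q.
Proof.
move=> hn0; apply: xget_unique.
  split; first exact: proj_on.
  by move=> y Hy; rewrite (proj_pyth q hn0 Hy) lerDl dot_self_ge0.
move=> y [Hy Hmin]; have := Hmin _ (proj_on q hn0).
rewrite (proj_pyth q hn0 Hy) gerDl => H.
apply/eqP; rewrite -subr_eq0; apply/eqP; apply: dot_self_eq0.
by apply/eqP; rewrite eq_le H dot_self_ge0.
Qed.

Lemma hit_iff h q v : hn h != 0 ->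
  ray_hits h q v <-> 0 <= dot v (closest h q - q).
Proof.
move=> hn0; have N0 := dot_pos hn0.
have iN : 0 < (dot (hn h) (hn h))^-1 by rewrite invr_gt0.
rewrite closest_proj // /proj addrC addKr dotZr mulrC (dotC v).
split.
  case=> [[t [t0 Ht]]|H0]; last by rewrite H0 mul0r.
  move: Ht; rewrite /on_hyp dotDr dotZr => Ht.
  have -> : hb h - dot (hn h) q = t * dot (hn h) v by lra.
  set iNN := (dot (hn h) (hn h))^-1 in iN *.
  have := mulr_ge0 (mulr_ge0 t0 (ltW iN)) (sqr_ge0 (dot (hn h) v)).
  by rewrite expr2; nra.
case: (eqVneq (dot (hn h) v) 0) => [nv0|nv0]; first by move=> _; right.
move=> H; left; exists ((hb h - dot (hn h) q) / dot (hn h) v); split.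
  set iNN := (dot (hn h) (hn h))^-1 in iN H.
  have H1 : 0 <= dot (hn h) v * ((hb h - dot (hn h) q) * iNN) by [].
  have H2 : 0 <= dot (hn h) v * (hb h - dot (hn h) q).
    nra.
  have -> : (hb h - dot (hn h) q) / dot (hn h) v =
            (dot (hn h) v * (hb h - dot (hn h) q)) / (dot (hn h) v) ^+ 2.
    by field.
  by apply: divr_ge0 => //; apply: sqr_ge0.
rewrite /on_hyp dotDr dotZr; field; exact: nv0.
Qed.

Lemma natmin_spec (P : set nat) : (exists n, P n) ->
  P (natmin P) /\ forall j, P j -> (natmin P <= j)%N.
Proof.
move=> [n Pn]; apply: (xgetPex 0%N (P := [set k | P k /\ forall j, P j -> (k <= j)%N])).
have ex : exists k, `[< P k >] by exists n; apply/asboolP.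
case: (ex_minnP ex) => m /asboolP Pm Hm; exists m; split => // j Pj.
by apply: Hm; apply/asboolP.
Qed.

Lemma natmin_empty (P : set nat) : (forall n, ~ P n) -> natmin P = 0%N.
Proof.
move=> H; apply: xgetPN => k [Pk _]; exact: H Pk.
Qed.

Lemma conv_shift (J : finType) (p : J -> 'rV[R]_d) S q :
  in_conv p S q <-> in_conv (fun i => p i - q) S 0.
Proof.
split=> -[w [w0 [w1 w2]]]; exists w; do 2!split => //.
  under eq_bigr do rewrite scalerBr.
  by rewrite sumrB w2 -scaler_suml w1 scale1r subrr.
move: w2; under eq_bigr do rewrite scalerBr.
by rewrite sumrB -scaler_suml w1 scale1r => /eqP; rewrite subr_eq0 => /eqP.
Qed.

Lemma count_eq (J : finType) (A : J -> hyp R d) (S : {set J}) q v :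
  (forall i, hn (A i) != 0) ->
  #|[set i in S | `[< ray_hits (A i) q v >] ]| =
  #|[set i in S | 0 <= dot v (dual A q i - q)]|.
Proof.
move=> hA; apply: eq_card => i; rewrite !inE.
by rewrite (propext (hit_iff q v (hA i))) asboolb.
Qed.

Lemma key (J : finType) (A : J -> hyp R d) (S : {set J}) q :
  (forall i, hn (A i) != 0) ->
  (1 <= RD A S q)%N <-> in_conv (dual A q) S q.
Proof.
move=> hA; rewrite conv_shift; split.
  move=> H1; apply: contrapT => Hn.
  case: (gordan (fun i => dual A q i - q) (erefl #|S|)) => [//|[v Hv]].
  case: (pselect (exists v : 'rV[R]_d, v != 0)) => [[v0 v0n]|nov]; last first.
    move: H1; rewrite /RD natmin_empty // => k [w [wn _]]; apply: nov; by exists w.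
  pose w := if v == 0 then v0 else v.
  have wn : w != 0 by rewrite /w; case: ifP => // /negbT.
  have := (natmin_spec (P := [set k | exists v : 'rV[R]_d, v != 0 /\
            k = #|[set i in S | `[< ray_hits (A i) q v >] ]| ])).
  case.
    exists 0%N; exists w; split => //; rewrite count_eq //; apply/esym/eq_card0 => i.
    rewrite !inE; apply/negbTE; apply/negP => /andP [iS].
    have vn : v != 0 by apply/eqP => v0e; have := Hv i iS; rewrite v0e dot0l ltxx.
    rewrite /w (negbTE vn) leNgt; by rewrite Hv.
  move=> _ /(_ 0%N) Hle; move: H1; rewrite /RD.
  suff -> : natmin [set k | exists v : 'rV[R]_d, v != 0 /\
            k = #|[set i in S | `[< ray_hits (A i) q v >] ]| ] = 0%N by [].
  apply/eqP; rewrite -leqn0; apply: Hle.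
  exists w; split => //; rewrite count_eq //; apply/esym/eq_card0 => i.
  rewrite !inE; apply/negbTE; apply/negP => /andP [iS].
  have vn : v != 0 by apply/eqP => v0e; have := Hv i iS; rewrite v0e dot0l ltxx.
  rewrite /w (negbTE vn) leNgt; by rewrite Hv.
move=> [w [w0 [w1 w2]]].
have [i0 i0S] : exists i0, i0 \in S.
  apply: contrapT => nS; move: w1; rewrite big_pred0 => [/eqP|i].
    by rewrite eq_sym oner_eq0.
  by apply/negP => iS; apply: nS; exists i.
have := (natmin_spec (P := [set k | exists v : 'rV[R]_d, v != 0 /\
            k = #|[set i in S | `[< ray_hits (A i) q v >] ]| ])).
case.
  by eexists; exists (hn (A i0)); split; first exact: hA.
move=> [v [vn E]] _; rewrite /RD E count_eq //.
apply/card_gt0P; apply: contrapT => nex.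
have neg : forall j, j \in S -> dot v (dual A q j - q) < 0.
  move=> j jS; rewrite ltNge; apply/negP => Hj; apply: nex; exists j.
  by rewrite inE jS Hj.
have := neg_comb w0 w1 neg.
have -> : \sum_(j in S) w j * dot v (dual A q j - q) = 0.
  by under eq_bigr do rewrite -dotZr; rewrite -dot_sumr w2 dot0r.
by rewrite ltxx.
Qed.
End Dot.

Lemma natmin_eq (P1 P2 : set nat) : (forall k, P1 k -> P2 k) ->
  (forall k, P2 k -> exists2 k', P1 k' & (k' <= k)%N) -> natmin P1 = natmin P2.
Proof.
move=> h12 h21; case: (pselect (exists k, P1 k)) => [ex|nex].
  have [m1 M1] := natmin_spec ex.
  have [m2 M2] := natmin_spec (P := P2) (ex_intro _ _ (h12 _ m1)).
  apply/eqP; rewrite eqn_leq M2 ?andbT; last exact: h12.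
  have [k' k'1 k'le] := h21 _ m2; exact: leq_trans (M1 _ k'1) k'le.
rewrite !natmin_empty // => k.
  by move=> /h21 [k' k'1 _]; apply: nex; exists k'.
by move=> k1; apply: nex; exists k.
Qed.

Unset Implicit Arguments.
Theorem corollary2p2 (R : realType) (d : nat) (I : finType)
  (A : I -> hyp R d) (q : 'rV[R]_d) :
  general_position A ->
  RD A [set: I] q = TD (dual A q) q /\
  HTvD A q = TvD (dual A q) q /\
  HED A q = ED (dual A q) q.
Proof.
move=> [hA _].
have cnt : forall v : 'rV[R]_d,
  #|[set i in [set: I] | `[< ray_hits (A i) q v >] ]| =
  #|[set i | dot (- v) (dual A q i) <= dot (- v) q]|.
  move=> v; rewrite count_eq //; apply: eq_card => i; rewrite !inE.
  by rewrite dotBr subr_ge0 !dotNl lerN2.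
split; [|split].
- apply: natmin_eq.
    move=> k [v [vn ->]]; exists (- v), (dot (- v) q); split; first by rewrite oppr_eq0.
    by split; [exact: lexx | exact: cnt].
  move=> k [c [e [cn [ce ->]]]].
  exists #|[set i in [set: I] | `[< ray_hits (A i) q (- c) >] ]|.
    by exists (- c); split => //; rewrite oppr_eq0.
  rewrite cnt opprK; apply: subset_leq_card; apply/fintype.subsetP => i; rewrite !inE.
  by move=> H; exact: le_trans H ce.
- rewrite /HTvD /TvD; congr natmax; apply/funext => r /=; apply/propext.
  split=> -[f Hf]; exists f => j; apply/key => //; exact: Hf.
- rewrite /HED /ED; congr natmax; apply/funext => r /=; apply/propext.
  split=> -[P [HP Hs]]; exists P; split => // s Hsj.
    by apply/(@key _ _ _ (fun j => A (s j)) [set: 'I_d.+1] q (fun j => hA (s j))); apply: Hs.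
  by apply/(@key _ _ _ (fun j => A (s j)) [set: 'I_d.+1] q (fun j => hA (s j))); apply: Hs.
Qed.
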